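(* Let $Z>0$, let $W_{at}$ be as in the context with Taylor coefficients $(w_{2k})_{k\ge0}$, let $R_1,\dots,R_n$ be the radial atomic functions with eigenvalues $\epsilon_1,\dots,\epsilon_n$, $\mathcal R=(R_1,\dots,R_n)^T$, $\mathcal E=\mathrm{diag}(\epsilon_1,\dots,\epsilon_n)$, and let $(\zeta_j)_{j\ge0}\subset\mathbb R^n$ be the coefficients of the expansion of $\mathcal R$ at $0$. Then there exist real numbers $(\mu_j^{(k)})_{0\le j\le k\le n-1}$ and $(\nu_j^{(k)})_{0\le j\le k\le n-1}$ such that $$\zeta_{2k}=\sum_{j=0}^k\mu_j^{(k)}\mathcal E^j\zeta_0,\qquad\zeta_{2k+1}=\sum_{j=0}^k\nu_j^{(k)}\mathcal E^j\zeta_0,$$ with $\mu_k^{(k)}\ne0$ for every $0\le k\le n-1$. Moreover, $$\zeta_1=-Z\zeta_0,\qquad\zeta_2=-\tfrac13\mathcal E\zeta_0+\tfrac13(Z^2+w_0)\zeta_0,\qquad\zeta_3=\tfrac29Z\mathcal E\zeta_0-\Big(\tfrac{Z^3}{18}+\tfrac29Zw_0\Big)\zeta_0,$$ $$\zeta_4=\tfrac1{30}\mathcal E^2\zeta_0-\Big(\tfrac{Z^2}{18}+\tfrac{w_0}{15}\Big)\mathcal E\zeta_0+\Big(\tfrac{Z^4}{180}+\tfrac{Z^2w_0}{18}+\tfrac{w_0^2}{30}+\tfrac{w_2}{10}\Big)\zeta_0,$$ $$\zeta_5=-\tfrac{23}{1350}Z\mathcal E^2\zeta_0+\Big(\tfrac{Z^3}{135}+\tfrac{23}{675}w_0Z\Big)\mathcal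 E\zeta_0-\Big(\tfrac{Z^5}{2700}+\tfrac{Z^3w_0}{135}+\tfrac{23}{1350}Zw_0^2+\tfrac{11}{150}Zw_2\Big)\zeta_0.$$
   Context: $W_{at}$ is a smooth bounded real function on $[0,\infty)$ such that $\mathbf x\mapsto W_{at}(|\mathbf x|)$ is smooth on $\mathbb R^3$; hence for every $N$, $W_{at}(r)=\sum_{k=0}^Nw_{2k}r^{2k}+O(r^{2N+2})$ as $r\to0$, which defines the reals $w_{2k}$. For $k=1,\dots,n$, $\varphi_k(\mathbf x)=R_k(|\mathbf x|)Y_{00}$ ($Y_{00}=1/\sqrt{4\pi}$) are $L^2$-normalized eigenfunctions of the atomic Hamiltonian $-\frac12\Delta-\frac{Z}{|\mathbf x|}+W_{at}(|\mathbf x|)$ on $L^2(\mathbb R^3)$ with angular momentum $0$ and eigenvalues $\epsilon_k$; $R_k$ is continuous on $[0,\infty)$ and satisfies $-\frac12R_k''-\frac1rR_k'-\frac ZrR_k+W_{at}R_k=\epsilon_kR_k$ on $(0,\infty)$. The vectors $\zeta_j\in\mathbb R^n$ are the coefficients of the singular expansion of $\mathcal R$ at $r=0$: for every $N$, $\mathcal R(r)-\sum_{j=0}^N\zeta_jr^j=O(r^{N+1})$ as $r\to0^+$. *)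

(* Defs.v *)
From Stdlib Require Import Reals.
From Coquelicot Require Import Coquelicot.
Open Scope R_scope.

Definition bigO_0plus (f g : R -> R) : Prop :=
  exists C delta : R, 0 < delta /\
    forall r : R, 0 < r < delta -> Rabs (f r) <= C * Rabs (g r).

Definition smooth_R (f : R -> R) : Prop :=
  forall (m : nat) (x : R), ex_derive_n f m x.

(* The hypotheses on W_at: bounded on [0,oo), x |-> W(|x|) smooth
   (rendered via the even extension r |-> W(|r|) on R), and the Taylor
   coefficients w_{2k} = w k at 0. *)
Definition W_at_hyp (W : R -> R) (w : nat -> R) : Prop :=
  (exists M : R, forall r : R, 0 <= r -> Rabs (W r) <= M) /\
  smooth_R (fun r => W (Rabs r)) /\
  (forall N : nat,
     bigO_0plus (fun r => W r - sum_f_R0 (fun k => w k * r ^ (2 * k)) N)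
                (fun r => r ^ (2 * N + 2))).

(* Rk is an L^2-normalized radial (angular momentum 0) eigenfunction profile:
   continuous on [0,oo), C^2 on (0,oo), solving the radial equation
   -1/2 R'' - (1/r) R' - (Z/r) R + W R = eps R, and
   int_0^oo Rk(r)^2 r^2 dr = 1 (i.e. ||Rk Y00||_{L^2(R^3)} = 1). *)
Definition radial_eigen (Z : R) (W : R -> R) (eps : R) (Rk : R -> R) : Prop :=
  (forall r : R, 0 < r -> continuous Rk r) /\
  filterlim Rk (at_right 0) (locally (Rk 0)) /\
  (forall r : R, 0 < r -> ex_derive Rk r /\ ex_derive (Derive Rk) r) /\
  (forall r : R, 0 < r ->
     - / 2 * Derive (Derive Rk) r - / r * Derive Rk r - Z / r * Rk r
       + W r * Rk r = eps * Rk r) /\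
  is_RInt_gen (fun r => Rk r ^ 2 * r ^ 2) (at_point 0) (Rbar_locally p_infty) 1.

(* zeta j i = i-th component of zeta_j: R_i(r) - sum_{j<=N} zeta_j,i r^j = O(r^(N+1)). *)
Definition singular_expansion (Rk : R -> R) (zeta : nat -> R) : Prop :=
  forall N : nat,
    bigO_0plus (fun r => Rk r - sum_f_R0 (fun j => zeta j * r ^ j) N)
               (fun r => r ^ (N + 1)).

(* Main.v *)
Require Import Defs.
From Stdlib Require Import Reals Lra Lia ClassicalEpsilon.
From Coquelicot Require Import Coquelicot.
Open Scope R_scope.


Fixpoint ssum (f : nat -> R) (n : nat) : R :=
  match n with O => 0 | S n => ssum f n + f n end.

Lemma ssum_ext f g n : (forall j, (j < n)%nat -> f j = g j) -> ssum f n = ssum g n.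
Proof. induction n; simpl; intros H; auto. rewrite IHn by (intros; apply H; lia). rewrite H by lia. auto. Qed.

Lemma ssum_shift f n : ssum f (S n) = f O + ssum (fun j => f (S j)) n.
Proof. induction n; simpl in *. ring. rewrite IHn. ring. Qed.

Lemma ssum_plus f g n : ssum (fun j => f j + g j) n = ssum f n + ssum g n.
Proof. induction n; simpl; [ring|rewrite IHn; ring]. Qed.

Lemma ssum_scal c f n : ssum (fun j => c * f j) n = c * ssum f n.
Proof. induction n; simpl; [ring|rewrite IHn; ring]. Qed.

Lemma sum_f_R0_ssum f N : sum_f_R0 f N = ssum f (S N).
Proof. induction N; simpl in *. ring. rewrite IHN. ring. Qed.

Definition Sn (a : nat -> R) (N : nat) (r : R) := ssum (fun j => a j * r ^ j) N.

Definition lvl (f : R -> R) (a : nat -> R) (N : nat) : Prop :=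
  exists C delta, 0 < delta /\ forall r, 0 < r < delta -> Rabs (f r - Sn a N r) <= C * r ^ N.

Definition has_exp f a := forall N, lvl f a N.

Definition sr (a : nat -> R) (j : nat) : R := match j with O => 0 | S j => a j end.
Definition sl (a : nat -> R) (j : nat) : R := a (S j).
Definition dlt (c : R) (j : nat) : R := match j with O => c | _ => 0 end.

Lemma Sn_sr a N r : Sn (sr a) (S N) r = r * Sn a N r.
Proof. unfold Sn. rewrite ssum_shift. simpl. rewrite <- ssum_scal. 
  rewrite Rmult_0_l, Rplus_0_l. apply ssum_ext. intros. simpl. ring. Qed.

Lemma Sn_sl a N r : Sn a (S N) r = a O + r * Sn (sl a) N r.
Proof. unfold Sn. rewrite ssum_shift. simpl. rewrite <- ssum_scal. 
  f_equal. ring. apply ssum_ext. intros. unfold sl. simpl. ring. Qed.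

Lemma Sn_dlt c N r : Sn (dlt c) N r = match N with O => 0 | _ => c end.
Proof. destruct N. reflexivity. unfold Sn. rewrite ssum_shift. simpl.
  assert (H : forall M, ssum (fun j => 0 * (r * r ^ j)) M = 0).
  { induction M; simpl; try rewrite IHM; ring. }
  rewrite H. ring. Qed.

Lemma Sn_plus a b N r : Sn (fun j => a j + b j) N r = Sn a N r + Sn b N r.
Proof. unfold Sn. rewrite <- ssum_plus. apply ssum_ext. intros; ring. Qed.

Lemma Sn_scal c a N r : Sn (fun j => c * a j) N r = c * Sn a N r.
Proof. unfold Sn. rewrite <- ssum_scal. apply ssum_ext. intros; ring. Qed.

Lemma Sn_ext a b N r : (forall j, (j < N)%nat -> a j = b j) -> Sn a N r = Sn b N r.
Proof. intros H. unfold Sn. apply ssum_ext. intros. rewrite H; auto. Qed.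

Lemma pow_le1 r n : 0 <= r <= 1 -> r ^ n <= 1.
Proof. intros. rewrite <- (pow1 n). apply pow_incr. lra. Qed.

Lemma Sn_bound a N r : 0 <= r <= 1 -> Rabs (Sn a N r) <= ssum (fun j => Rabs (a j)) N.
Proof. intros Hr. unfold Sn. induction N; simpl. rewrite Rabs_R0; lra.
  eapply Rle_trans. apply Rabs_triang. apply Rplus_le_compat. auto.
  rewrite Rabs_mult. rewrite <- (Rmult_1_r (Rabs (a N))) at 2. apply Rmult_le_compat_l.
  apply Rabs_pos. rewrite Rabs_right. apply pow_le1; auto. apply Rle_ge, pow_le; lra. Qed.

Lemma lvl_ext_coef f a b N : (forall j, (j < N)%nat -> a j = b j) -> lvl f a N -> lvl f b N.
Proof. intros H [C [d [Hd Hb]]]. exists C, d. split; auto. intros r Hr.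
  rewrite <- (Sn_ext a b); auto. Qed.

Lemma lvl_ext_fun f g a N : (forall r, 0 < r -> f r = g r) -> lvl f a N -> lvl g a N.
Proof. intros H [C [d [Hd Hb]]]. exists C, d. split; auto. intros r Hr.
  rewrite <- H by lra. auto. Qed.

Lemma lvl_plus f g a b N : lvl f a N -> lvl g b N ->
  lvl (fun r => f r + g r) (fun j => a j + b j) N.
Proof. intros [C [d [Hd Hb]]] [C' [d' [Hd' Hb']]]. exists (C + C'), (Rmin d d'). split.
  apply Rmin_glb_lt; auto. intros r Hr. rewrite Sn_plus.
  assert (r < d) by (eapply Rlt_le_trans; [apply Hr|apply Rmin_l]).
  assert (r < d') by (eapply Rlt_le_trans; [apply Hr|apply Rmin_r]).
  specialize (Hb r ltac:(lra)). specialize (Hb' r ltac:(lra)).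
  replace (f r + g r - (Sn a N r + Sn b N r)) with ((f r - Sn a N r) + (g r - Sn b N r)) by ring.
  eapply Rle_trans. apply Rabs_triang. lra. Qed.

Lemma lvl_scal c f a N : lvl f a N -> lvl (fun r => c * f r) (fun j => c * a j) N.
Proof. intros [C [d [Hd Hb]]]. exists (Rabs c * C), d. split; auto. intros r Hr.
  rewrite Sn_scal. replace (c * f r - c * Sn a N r) with (c * (f r - Sn a N r)) by ring.
  rewrite Rabs_mult, Rmult_assoc. apply Rmult_le_compat_l. apply Rabs_pos. auto. Qed.

Lemma lvl_mulr f a N : lvl f a N -> lvl (fun r => r * f r) (sr a) (S N).
Proof. intros [C [d [Hd Hb]]]. exists C, d. split; auto. intros r Hr.
  rewrite Sn_sr. replace (r * f r - r * Sn a N r) with (r * (f r - Sn a N r)) by ring.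
  rewrite Rabs_mult, Rabs_right by lra. simpl.
  replace (C * (r * r ^ N)) with (r * (C * r ^ N)) by ring.
  apply Rmult_le_compat_l. lra. auto. Qed.

Lemma lvl_shift f a N : lvl f a (S N) -> lvl (fun r => (f r - a O) / r) (sl a) N.
Proof. intros [C [d [Hd Hb]]]. exists C, d. split; auto. intros r Hr.
  specialize (Hb r Hr). rewrite Sn_sl in Hb.
  replace ((f r - a O) / r - Sn (sl a) N r) with ((f r - (a O + r * Sn (sl a) N r)) / r)
    by (field; lra).
  unfold Rdiv. rewrite Rabs_mult, Rabs_inv, (Rabs_right r) by lra.
  apply (Rmult_le_reg_r r). lra. rewrite Rmult_assoc, Rinv_l by lra. simpl in Hb. lra. Qed.

Lemma lvl_const c N : lvl (fun _ => c) (dlt c) N.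
Proof. exists (Rabs c), 1. split. lra. intros r Hr. rewrite Sn_dlt. destruct N.
  simpl. rewrite Rminus_0_r. lra. rewrite Rminus_diag, Rabs_R0.
  apply Rmult_le_pos. apply Rabs_pos. apply pow_le; lra. Qed.

Lemma lvl_mono f a N : lvl f a (S N) -> lvl f a N.
Proof. intros [C [d [Hd Hb]]]. exists (Rabs C + Rabs (a N)), (Rmin d 1). split.
  apply Rmin_glb_lt; lra. intros r Hr.
  assert (r < d) by (eapply Rlt_le_trans; [apply Hr|apply Rmin_l]).
  assert (r < 1) by (eapply Rlt_le_trans; [apply Hr|apply Rmin_r]).
  specialize (Hb r ltac:(lra)). unfold Sn in *. simpl in Hb.
  replace (f r - ssum (fun j => a j * r ^ j) N) with
    ((f r - (ssum (fun j => a j * r ^ j) N + a N * r ^ N)) + a N * r ^ N) by ring.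
  eapply Rle_trans. apply Rabs_triang. rewrite Rmult_plus_distr_r.
  apply Rplus_le_compat. eapply Rle_trans. apply Hb.
  assert (0 <= r ^ N) by (apply pow_le; lra).
  assert (C*(r*r^N) <= Rabs C * (r * r^N)) by (apply Rmult_le_compat_r; [nra|apply Rle_abs]).
  assert (Rabs C * (r*r^N) <= Rabs C * r^N) by (apply Rmult_le_compat_l; [apply Rabs_pos| nra]).
  lra.
  rewrite Rabs_mult, (Rabs_right (r ^ N)). lra. apply Rle_ge, pow_le; lra. Qed.

Lemma lvl_mono_le f a M K : lvl f a M -> (K <= M)%nat -> lvl f a K.
Proof. intros H Hle. induction Hle; auto. apply IHHle. apply lvl_mono; auto. Qed.

Definition conv (a b : nat -> R) (m : nat) : R := ssum (fun j => a j * b (m - j)%nat) (S m).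

Lemma conv_0 a b : conv a b O = a O * b O.
Proof. unfold conv. simpl. ring. Qed.
Lemma conv_1 a b : conv a b 1 = a O * b 1%nat + a 1%nat * b O.
Proof. unfold conv. simpl. ring. Qed.
Lemma conv_SS a b k : conv a b (S (S k)) = a O * b (S (S k)) + b O * a (S (S k)) + conv (sl a) (sl b) k.
Proof. unfold conv. rewrite ssum_shift. simpl (S (S k) - 0)%nat.
  change (ssum (fun j => a (S j) * b (S (S k) - S j)%nat) (S (S k))) with
    (ssum (fun j => a (S j) * b (S (S k) - S j)%nat) (S k) + a (S (S k)) * b (S (S k) - S (S k))%nat).
  rewrite Nat.sub_diag. 
  rewrite (ssum_ext _ (fun j => sl a j * sl b (k - j)%nat)). ring.
  intros j Hj. unfold sl. f_equal. f_equal. lia. Qed.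

Definition Pprod N := forall f g a b, lvl f a N -> lvl g b N ->
  lvl (fun r => f r * g r) (conv a b) N.

Lemma lvl0_bound f a : lvl f a O <-> exists C d, 0 < d /\ forall r, 0 < r < d -> Rabs (f r) <= C.
Proof. unfold lvl, Sn. simpl. split; intros [C [d [Hd H]]]; exists C, d; split; auto;
  intros r Hr; specialize (H r Hr); rewrite ?Rminus_0_r, ?Rmult_1_r in *; auto. Qed.

Lemma Pprod0 : Pprod O.
Proof. intros f g a b Hf Hg. apply lvl0_bound in Hf, Hg. apply lvl0_bound.
  destruct Hf as [C [d [Hd H]]], Hg as [C' [d' [Hd' H']]].
  exists (C * C'), (Rmin d d'). split. apply Rmin_glb_lt; auto. intros r Hr.
  assert (r < d) by (eapply Rlt_le_trans; [apply Hr|apply Rmin_l]).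
  assert (r < d') by (eapply Rlt_le_trans; [apply Hr|apply Rmin_r]).
  rewrite Rabs_mult. apply Rmult_le_compat; try apply Rabs_pos; [apply H|apply H']; lra. Qed.

Lemma split_fun f g a0 b0 r : 0 < r ->
  f r * g r = a0 * b0 + r * (a0 * ((g r - b0) / r) + b0 * ((f r - a0) / r))
     + r * (r * ((f r - a0) / r * ((g r - b0) / r))).
Proof. intros. field. lra. Qed.

Lemma Pprod1 : Pprod 1.
Proof. intros f g a b Hf Hg.
  apply lvl_shift in Hf. apply lvl_shift in Hg.
  pose proof (Pprod0 _ _ _ _ Hf Hg) as Hfg.
  apply lvl_mulr in Hfg. apply lvl_mulr in Hfg. apply lvl_mono in Hfg.
  pose proof (lvl_mulr _ _ _ (lvl_plus _ _ _ _ _ (lvl_scal (a O) _ _ _ Hg) (lvl_scal (b O) _ _ _ Hf))) as H2.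
  pose proof (lvl_plus _ _ _ _ _ (lvl_plus _ _ _ _ _ (lvl_const (a O * b O) 1) H2) Hfg) as H3.
  eapply lvl_ext_fun. intros r Hr. symmetry. apply (split_fun f g (a O) (b O) r Hr).
  eapply lvl_ext_coef; [|apply H3]. intros j Hj. destruct j; [|lia].
  rewrite conv_0. simpl. ring. Qed.

Lemma PprodSS N : Pprod N -> Pprod (S (S N)).
Proof. intros IH f g a b Hf Hg.
  apply lvl_shift in Hf. apply lvl_shift in Hg.
  pose proof (IH _ _ _ _ (lvl_mono _ _ _ Hf) (lvl_mono _ _ _ Hg)) as Hfg.
  apply lvl_mulr in Hfg. apply lvl_mulr in Hfg.
  pose proof (lvl_mulr _ _ _ (lvl_plus _ _ _ _ _ (lvl_scal (a O) _ _ _ Hg) (lvl_scal (b O) _ _ _ Hf))) as H2.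
  pose proof (lvl_plus _ _ _ _ _ (lvl_plus _ _ _ _ _ (lvl_const (a O * b O) (S (S N))) H2) Hfg) as H3.
  eapply lvl_ext_fun. intros r Hr. symmetry. apply (split_fun f g (a O) (b O) r Hr).
  eapply lvl_ext_coef; [|apply H3]. intros j Hj. destruct j as [|[|k]].
  rewrite conv_0. simpl. ring. rewrite conv_1. simpl. unfold sl. ring.
  rewrite conv_SS. simpl. unfold sl. ring. Qed.

Lemma Pprod_all N : Pprod N.
Proof. assert (H : forall N, Pprod N /\ Pprod (S N)).
  { induction N0. split. apply Pprod0. apply Pprod1. split. apply IHN0. apply PprodSS. apply IHN0. }
  apply H. Qed.

Lemma has_exp_mult f g a b : has_exp f a -> has_exp g b -> has_exp (fun r => f r * g r) (conv a b).
Proof. intros Hf Hg N. apply Pprod_all; auto. Qed.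

Lemma deriv_poly (b : nat -> R) (p : nat -> nat) n x :
  is_derive (fun r => ssum (fun j => b j * r ^ S (p j)) n) x
            (ssum (fun j => b j * INR (S (p j)) * x ^ p j) n).
Proof. induction n; simpl. exact (is_derive_const 0 x).
  apply (is_derive_plus (fun r => ssum (fun j => b j * r ^ S (p j)) n)
                        (fun r => b n * r ^ S (p n))). auto.
  auto_derive. auto. simpl. ring. Qed.

Lemma is_derive_Rminus (f g : R -> R) x df dg : is_derive f x df -> is_derive g x dg ->
  is_derive (fun r => f r - g r) x (df - dg).
Proof. intros. apply (is_derive_minus f g); auto. Qed.

Lemma is_derive_cont (f : R -> R) x l : is_derive f x l -> continuity_pt f x.
Proof. intros H. apply continuity_pt_filterlim. apply (ex_derive_continuous f x). exists l; auto. Qed.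

Lemma second_diff (g g1 g2 : R -> R) r : 0 < r ->
  (forall x, 0 < x -> is_derive g x (g1 x)) -> (forall x, 0 < x -> is_derive g1 x (g2 x)) ->
  exists xi, r <= xi <= 3 * r /\ g (3 * r) - 2 * g (2 * r) + g r = r ^ 2 * g2 xi.
Proof. intros Hr H1 H2.
  assert (Hphi : forall x, 0 < x -> is_derive (fun y => g (y + r) - g y) x (g1 (x + r) - g1 x)).
  { intros x Hx. apply is_derive_Rminus; [|apply H1; lra].
    assert (Hd : is_derive (fun y : R => y + r) x 1) by (auto_derive; auto; ring).
    assert (Hc := is_derive_comp g (fun y => y + r) x (g1 (x + r)) 1 (H1 (x + r) ltac:(lra)) Hd).
    unfold scal in Hc; simpl in Hc; unfold mult in Hc; simpl in Hc. rewrite Rmult_1_l in Hc. exact Hc. }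
  destruct (MVT_gen (fun y => g (y + r) - g y) r (2 * r) (fun x => g1 (x + r) - g1 x)) as [eta [Heta Heq]].
  { intros x Hx. rewrite Rmin_left in Hx by lra. apply Hphi. lra. }
  { intros x Hx. rewrite Rmin_left in Hx by lra. eapply is_derive_cont. apply Hphi. lra. }
  rewrite Rmin_left, Rmax_right in Heta by lra.
  destruct (MVT_gen g1 eta (eta + r) g2) as [xi [Hxi Heq2]].
  { intros x Hx. rewrite Rmin_left in Hx by lra. apply H2. lra. }
  { intros x Hx. rewrite Rmin_left in Hx by lra. eapply is_derive_cont. apply H2. lra. }
  rewrite Rmin_left, Rmax_right in Hxi by lra.
  exists xi. split. lra. replace (2 * r + r) with (3 * r) in Heq by ring.
  replace (r + r) with (2 * r) in Heq by ring.
  rewrite Heq2 in Heq. lra. Qed.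

Lemma small_zero x C d : 0 < d -> (forall r, 0 < r < d -> Rabs x <= C * r) -> x = 0.
Proof. intros Hd H. destruct (Req_dec x 0) as [|Hx]; auto. exfalso.
  assert (Hax : 0 < Rabs x) by (apply Rabs_pos_lt; auto).
  set (r := Rmin (d / 2) (Rabs x / (2 * (Rabs C + 1)))).
  assert (HC : 0 < Rabs C + 1) by (pose proof (Rabs_pos C); lra).
  assert (Hr1 : r <= d / 2) by apply Rmin_l.
  assert (Hr2 : r <= Rabs x / (2 * (Rabs C + 1))) by apply Rmin_r.
  assert (Hr0 : 0 < r). { apply Rmin_glb_lt. lra. apply Rdiv_lt_0_compat; lra. }
  specialize (H r ltac:(lra)).
  assert (C * r <= (Rabs C + 1) * r) by (apply Rmult_le_compat_r; [lra| pose proof (Rle_abs C); lra]).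
  assert ((Rabs C + 1) * r <= Rabs x / 2).
  { apply (Rmult_le_compat_l (Rabs C + 1)) in Hr2; [|lra]. eapply Rle_trans. apply Hr2.
    right. field. lra. }
  lra. Qed.

Lemma uniq_zero N : forall d, lvl (fun _ => 0) d N -> forall j, (j < N)%nat -> d j = 0.
Proof. induction N; intros d H j Hj. lia.
  assert (H0 : d O = 0).
  { assert (H1 : lvl (fun _ => 0) d 1) by (eapply lvl_mono_le; [apply H|lia]).
    destruct H1 as [C [dl [Hdl Hb]]]. apply (small_zero _ (Rabs C) dl Hdl).
    intros r Hr. specialize (Hb r Hr). unfold Sn in Hb. simpl in Hb.
    rewrite <- Rabs_Ropp. replace (- d O) with (0 - (0 + d O * 1)) by ring.
    eapply Rle_trans. apply Hb. rewrite Rmult_1_r. apply Rmult_le_compat_r. lra. apply Rle_abs. }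
  apply lvl_shift in H. destruct j. auto.
  apply (IHN (sl d)); [|lia]. eapply lvl_ext_fun; [|apply H]. intros r Hr. simpl. rewrite H0. field. lra. Qed.

Lemma Sn_scale b N k r : Sn b N (k * r) = Sn (fun j => b j * k ^ j) N r.
Proof. unfold Sn. apply ssum_ext. intros. rewrite Rpow_mult_distr. ring. Qed.

Lemma pow23 k : 2 ^ (k + 3) <= 3 ^ (k + 2).
Proof. induction k. simpl. lra. replace (S k + 3)%nat with (S (k + 3)) by lia.
  replace (S k + 2)%nat with (S (k + 2)) by lia. simpl. pose proof (pow_le 2 (k+3)). lra. Qed.

Lemma Sn_lin3 x y z N r : Sn x N r - 2 * Sn y N r + Sn z N r = Sn (fun j => x j - 2 * y j + z j) N r.
Proof. unfold Sn. induction N; simpl. ring. rewrite <- IHN. ring. Qed.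

Lemma Sn_minus x y N r : Sn (fun j => x j - y j) N r = Sn x N r - Sn y N r.
Proof. unfold Sn. induction N; simpl. ring. rewrite IHN. ring. Qed.

Definition kap (j : nat) : R := 3 ^ j - 2 * 2 ^ j + 1.

Lemma core (u u1 F : R -> R) (e c : nat -> R) m :
  (forall r, 0 < r -> is_derive u r (u1 r)) ->
  (forall r, 0 < r -> is_derive u1 r (F r)) ->
  lvl u e (S (S (S m))) -> lvl F c (S m) ->
  e (S (S m)) * (INR (S m) * INR (S (S m))) = c m.
Proof. intros Hu Hu1 [Cu [du [Hdu Hbu]]] [CF [dF [HdF HbF]]].
  set (q := fun j => c j / (INR (S j) * INR (S (S j)))).
  set (Q := fun r => ssum (fun j => q j * r ^ S (S j)) (S m)).
  set (Q1 := fun r => ssum (fun j => (q j * INR (S (S j))) * r ^ S j) (S m)).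
  assert (HQ : forall x, is_derive Q x (Q1 x)).
  { intros x. unfold Q, Q1. exact (deriv_poly q (fun j => S j) (S m) x). }
  assert (HQ1 : forall x, is_derive Q1 x (Sn c (S m) x)).
  { intros x. unfold Q1.
    assert (Hd := deriv_poly (fun j => q j * INR (S (S j))) (fun j => j) (S m) x).
    replace (Sn c (S m) x) with (ssum (fun j => q j * INR (S (S j)) * INR (S j) * x ^ j) (S m)).
    exact Hd. unfold Sn. apply ssum_ext. intros j _. unfold q. field.
    split; apply not_0_INR; lia. }
  set (g := fun r => u r - Q r).
  set (g1 := fun r => u1 r - Q1 r).
  set (g2 := fun r => F r - Sn c (S m) r).
  assert (Hg : forall x, 0 < x -> is_derive g x (g1 x)).
  { intros. apply is_derive_Rminus; auto. }
  assert (Hg1 : forall x, 0 < x -> is_derive g1 x (g2 x)).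
  { intros. apply is_derive_Rminus; auto. }
  set (b := fun j => e j - sr (sr q) j).
  set (d := fun j => b j * kap j).
  assert (HQS : forall r, Q r = Sn (sr (sr q)) (S (S (S m))) r).
  { intros r. rewrite Sn_sr, Sn_sr. unfold Q, Sn. rewrite <- !ssum_scal. apply ssum_ext.
    intros. simpl. ring. }
  assert (Hdd : forall r, Sn d (S (S (S m))) r =
      (Sn b (S (S (S m))) (3 * r) - 2 * Sn b (S (S (S m))) (2 * r) + Sn b (S (S (S m))) r)).
  { intros r. rewrite !Sn_scale. rewrite Sn_lin3.
    apply Sn_ext. intros. unfold d, kap. ring. }
  assert (Hlvl : lvl (fun _ => 0) d (S (S (S m)))).
  { exists (Rabs Cu * (3 ^ (S (S (S m))) + 2 * 2 ^ (S (S (S m))) + 1) + Rabs CF * 3 ^ (S m)).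
    exists (Rmin du dF / 3). split. apply Rdiv_lt_0_compat. apply Rmin_glb_lt; auto. lra.
    intros r Hr.
    assert (Hr3 : 3 * r < Rmin du dF) by lra.
    assert (3 * r < du) by (eapply Rlt_le_trans; [apply Hr3|apply Rmin_l]).
    assert (3 * r < dF) by (eapply Rlt_le_trans; [apply Hr3|apply Rmin_r]).
    destruct (second_diff g g1 g2 r ltac:(lra) Hg Hg1) as [xi [Hxi Heq]].
    set (E := fun x => u x - Sn e (S (S (S m))) x).
    assert (Hb : forall x, Sn b (S (S (S m))) x = g x - E x).
    { intros x. unfold g, E. rewrite HQS. unfold b. rewrite Sn_minus. ring. }
    rewrite Rminus_0_l, Rabs_Ropp, Hdd, !Hb.
    replace (g (3 * r) - E (3 * r) - 2 * (g (2 * r) - E (2 * r)) + (g r - E r))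
      with ((g (3 * r) - 2 * g (2 * r) + g r) - (E (3 * r) - 2 * E (2 * r) + E r)) by ring.
    rewrite Heq. eapply Rle_trans. apply Rabs_triang. rewrite Rabs_Ropp.
    assert (HE : forall x, 0 < x < du -> Rabs (E x) <= Rabs Cu * x ^ (S (S (S m)))).
    { intros x Hx. eapply Rle_trans. apply Hbu; auto. apply Rmult_le_compat_r.
      apply pow_le; lra. apply Rle_abs. }
    assert (HE3 := HE (3 * r) ltac:(lra)). assert (HE2 := HE (2 * r) ltac:(lra)).
    assert (HE1 := HE r ltac:(lra)).
    rewrite !Rpow_mult_distr in HE3, HE2.
    assert (HF := HbF xi ltac:(lra)).
    assert (HF' : Rabs (g2 xi) <= Rabs CF * 3 ^ S m * r ^ S m).
    { eapply Rle_trans. apply HF. rewrite Rmult_assoc, <- Rpow_mult_distr.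
      eapply Rle_trans. apply Rmult_le_compat_r. apply pow_le; lra. apply Rle_abs.
      apply Rmult_le_compat_l. apply Rabs_pos. apply pow_incr. lra. }
    assert (Hpos : 0 <= r ^ S (S (S m))) by (apply pow_le; lra).
    rewrite Rabs_mult. rewrite (Rabs_right (r ^ 2)) by (apply Rle_ge, pow_le; lra).
    assert (Hsplit : Rabs (E (3 * r) - 2 * E (2 * r) + E r) <= Rabs (E (3 * r)) + 2 * Rabs (E (2 * r)) + Rabs (E r)).
    { eapply Rle_trans. apply Rabs_triang. unfold Rminus. eapply Rle_trans. apply Rplus_le_compat_r.
      apply Rabs_triang. rewrite Rabs_Ropp, Rabs_mult, (Rabs_right 2) by lra. lra. }
    assert (r ^ 2 * Rabs (g2 xi) <= Rabs CF * 3 ^ S m * r ^ S (S (S m))).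
    { replace (r ^ S (S (S m))) with (r ^ 2 * r ^ S m) by (simpl; ring).
      replace (Rabs CF * 3 ^ S m * (r ^ 2 * r ^ S m)) with (r ^ 2 * (Rabs CF * 3 ^ S m * r ^ S m)) by ring.
      apply Rmult_le_compat_l. apply pow_le; lra. auto. }
    assert (Hpc : 0 <= Rabs Cu) by apply Rabs_pos.
    nra. }
  assert (Hz := uniq_zero _ d Hlvl (S (S m)) ltac:(lia)).
  unfold d, b in Hz. simpl sr in Hz.
  assert (Hk : kap (S (S m)) > 0).
  { unfold kap. pose proof (pow23 m). replace (m + 3)%nat with (S (S (S m))) in H by lia.
    replace (m + 2)%nat with (S (S m)) in H by lia. simpl in H |- *. lra. }
  assert (Heq : e (S (S m)) = q m).
  { apply Rmult_integral in Hz. destruct Hz as [Hz|Hz]; lra. }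
  rewrite Heq. unfold q. field. split; apply not_0_INR; lia. Qed.

Definition wev (w : nat -> R) (j : nat) : R := if Nat.even j then w (Nat.div2 j) else 0.

Lemma wev_even w k : wev w (2 * k) = w k.
Proof. unfold wev. rewrite Nat.even_mul, Nat.div2_double. reflexivity. Qed.

Lemma wev_odd w k : wev w (2 * k + 1) = 0.
Proof. unfold wev. rewrite Nat.even_add, Nat.even_mul. simpl. reflexivity. Qed.

Definition step (Z : R) (w : nat -> R) (e : R) (h : nat -> R) (m : nat) : R :=
  (-2 * Z * h m + 2 * sr (fun j => conv (wev w) h j + - e * h j) m) / (INR (S m) * INR (S (S m))).

Lemma sing_has_exp Rr a : singular_expansion Rr a -> has_exp Rr a.
Proof. intros H N. apply lvl_mono. destruct (H N) as [C [d [Hd Hb]]]. exists C, d. split; auto.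
  intros r Hr. specialize (Hb r Hr). rewrite sum_f_R0_ssum in Hb.
  rewrite (Rabs_right (r ^ _)) in Hb by (apply Rle_ge, pow_le; lra). rewrite Nat.add_1_r in Hb. exact Hb. Qed.

Lemma W_sum w N r : sum_f_R0 (fun k => w k * r ^ (2 * k)) N = Sn (wev w) (2 * N + 2) r.
Proof. induction N. unfold Sn. simpl. unfold wev. simpl. ring.
  rewrite tech5, IHN. replace (2 * S N + 2)%nat with (S (S (2 * N + 2))) by lia.
  unfold Sn. simpl ssum. replace (N + (N + 0) + 2)%nat with (2 * S N)%nat by lia.
    rewrite wev_even. replace (S (2 * S N)) with (2 * S N + 1)%nat by lia. rewrite wev_odd. ring. Qed.

Lemma W_has_exp W w : W_at_hyp W w -> has_exp W (wev w).
Proof. intros [_ [_ H]] N. apply (lvl_mono_le _ _ (2 * N + 2)); [|lia].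
  destruct (H N) as [C [d [Hd Hb]]]. exists C, d. split; auto.
  intros r Hr. specialize (Hb r Hr). rewrite W_sum in Hb.
  rewrite (Rabs_right (r ^ _)) in Hb by (apply Rle_ge, pow_le; lra). exact Hb. Qed.

Lemma comp_rec Z W w eps Rr a : W_at_hyp W w -> radial_eigen Z W eps Rr ->
  singular_expansion Rr a -> forall m, a (S m) = step Z w eps a m.
Proof. intros HW [_ [_ [Hder [Hode _]]]] Hs m.
  assert (HR := sing_has_exp _ _ Hs). assert (HWe := W_has_exp _ _ HW).
  set (F := fun r => -2 * Z * Rr r + 2 * (r * (W r * Rr r + - eps * Rr r))).
  set (c := fun j => -2 * Z * a j + 2 * sr (fun j => conv (wev w) a j + - eps * a j) j).
  assert (HF : lvl F c (S m)).
  { apply lvl_mono. apply lvl_plus. apply lvl_scal. apply HR.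
    apply lvl_scal. apply lvl_mulr. apply lvl_plus. apply (has_exp_mult W Rr); auto.
    apply lvl_scal. apply HR. }
  assert (Hu : lvl (fun r => r * Rr r) (sr a) (S (S (S m)))).
  { apply lvl_mulr. apply HR. }
  assert (Hc := core (fun r => r * Rr r) (fun r => Rr r + r * Derive Rr r) F (sr a) c m).
  assert (Heq : sr a (S (S m)) * (INR (S m) * INR (S (S m))) = c m).
  { apply Hc; auto.
    - intros r Hr. destruct (Hder r Hr) as [H1 H2]. auto_derive. exact H1. change (fun x => Rr x) with Rr. ring.
    - intros r Hr. destruct (Hder r Hr) as [H1 H2]. specialize (Hode r Hr). auto_derive. split; [exact H1|split; [exact H2|exact I]]. change (fun x => Rr x) with Rr. change (fun x => Derive Rr x) with (Derive Rr).
      unfold F. 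
      replace (Derive (Derive Rr) r) with
        (2 * (- / r * Derive Rr r - Z / r * Rr r + W r * Rr r - eps * Rr r)) by lra.
      field. lra. }
  simpl sr in Heq. transitivity (c m / (INR (S m) * INR (S (S m)))).
  rewrite <- Heq. field. split; apply not_0_INR; lia. reflexivity. Qed.

Lemma explicit Z w e a : (forall m, a (S m) = step Z w e a m) ->
  let z0 := a O in let w0 := w O in let w2 := w 1%nat in
     a 1%nat = - Z * z0 /\
     a 2%nat = - / 3 * e * z0 + / 3 * (Z ^ 2 + w0) * z0 /\
     a 3%nat = 2 / 9 * Z * e * z0 - (Z ^ 3 / 18 + 2 / 9 * Z * w0) * z0 /\
     a 4%nat = / 30 * e ^ 2 * z0 - (Z ^ 2 / 18 + w0 / 15) * e * z0
                    + (Z ^ 4 / 180 + Z ^ 2 * w0 / 18 + w0 ^ 2 / 30 + w2 / 10) * z0 /\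
     a 5%nat = - (23 / 1350) * Z * e ^ 2 * z0
                    + (Z ^ 3 / 135 + 23 / 675 * w0 * Z) * e * z0
                    - (Z ^ 5 / 2700 + Z ^ 3 * w0 / 135 + 23 / 1350 * Z * w0 ^ 2
                       + 11 / 150 * Z * w2) * z0.
Proof. intros H z0 w0 w2.
  assert (h1 : a 1%nat = - Z * z0).
  { rewrite H. unfold step, conv, wev, sr. simpl. unfold z0. field. }
  assert (h2 : a 2%nat = - / 3 * e * z0 + / 3 * (Z ^ 2 + w0) * z0).
  { rewrite H. unfold step, conv, wev, sr. simpl. rewrite h1. unfold z0, w0. field. }
  assert (h3 : a 3%nat = 2 / 9 * Z * e * z0 - (Z ^ 3 / 18 + 2 / 9 * Z * w0) * z0).
  { rewrite H. unfold step, conv, wev, sr. simpl. rewrite h2, h1. unfold z0, w0. field. }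
  assert (h4 : a 4%nat = / 30 * e ^ 2 * z0 - (Z ^ 2 / 18 + w0 / 15) * e * z0
                    + (Z ^ 4 / 180 + Z ^ 2 * w0 / 18 + w0 ^ 2 / 30 + w2 / 10) * z0).
  { rewrite H. unfold step, conv, wev, sr. simpl. rewrite h3, h2, h1. unfold z0, w0, w2. field. }
  repeat split; auto.
  rewrite H. unfold step, conv, wev, sr. simpl. rewrite h4, h3, h2, h1. unfold z0, w0, w2. field.
Qed.

Fixpoint hist Z w e (m : nat) : nat -> R :=
  match m with
  | O => fun _ => 1
  | S m => let h := hist Z w e m in fun l => if (l <=? m)%nat then h l else step Z w e h m
  end.

Definition Phi Z w e m := hist Z w e m m.

Lemma hist_stable Z w e m : forall l, (l <= m)%nat -> hist Z w e m l = Phi Z w e l.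
Proof. induction m; intros l Hl.
  - assert (l = O) by lia. subst. reflexivity.
  - simpl. destruct (Nat.leb_spec l m). apply IHm; auto.
    assert (l = S m) by lia. subst. unfold Phi.
    change (hist Z w e (S m) (S m)) with (if (S m <=? m)%nat then hist Z w e m (S m) else step Z w e (hist Z w e m) m).
    replace (S m <=? m)%nat with false by (symmetry; apply Nat.leb_gt; lia). reflexivity. Qed.

Lemma conv_ext a h h' m : (forall l, (l <= m)%nat -> h l = h' l) -> conv a h m = conv a h' m.
Proof. intros H. unfold conv. apply ssum_ext. intros j Hj. rewrite H. auto. lia. Qed.

Lemma step_ext Z w e h h' m : (forall l, (l <= m)%nat -> h l = h' l) -> step Z w e h m = step Z w e h' m.
Proof. intros H. unfold step. rewrite (H m) by lia. destruct m; simpl. reflexivity.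
  rewrite (H m) by lia. rewrite (conv_ext _ h h'). reflexivity. intros; apply H; lia. Qed.

Lemma Phi_S Z w e m : Phi Z w e (S m) = step Z w e (Phi Z w e) m.
Proof. unfold Phi at 1.
  change (hist Z w e (S m) (S m)) with (if (S m <=? m)%nat then hist Z w e m (S m) else step Z w e (hist Z w e m) m).
  replace (S m <=? m)%nat with false by (symmetry; apply Nat.leb_gt; lia).
  apply step_ext. intros. apply hist_stable; auto. Qed.

Lemma conv_scal a h c m : conv a (fun l => h l * c) m = conv a h m * c.
Proof. unfold conv. rewrite Rmult_comm, <- ssum_scal. apply ssum_ext. intros; ring. Qed.

Lemma step_scal Z w e h c m : step Z w e (fun l => h l * c) m = step Z w e h m * c.
Proof. unfold step. destruct m; cbn [sr]. field. split; apply not_0_INR; lia.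
  rewrite (conv_scal (wev w) h c m). field. split; apply not_0_INR; lia. Qed.

Lemma a_Phi Z w e a : (forall m, a (S m) = step Z w e a m) -> forall m, a m = Phi Z w e m * a O.
Proof. intros H. assert (G : forall m l, (l <= m)%nat -> a l = Phi Z w e l * a O).
  { induction m; intros l Hl.
    - assert (l = O) by lia. subst. unfold Phi. simpl. ring.
    - destruct (Nat.leb_spec l m). auto. assert (l = S m) by lia. subst.
      rewrite H, Phi_S, <- step_scal. apply step_ext. intros; apply IHm; auto. }
  intros m. apply (G m). lia. Qed.

Lemma Phi_SS Z w e m : Phi Z w e (S (S m)) =
  (-2 * Z * Phi Z w e (S m) + 2 * (conv (wev w) (Phi Z w e) m + - e * Phi Z w e m))
    / (INR (S (S m)) * INR (S (S (S m)))).
Proof. rewrite Phi_S. unfold step. reflexivity. Qed.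

Definition PolyL (d : nat) (L : R) (f : R -> R) : Prop :=
  exists cf : nat -> R, cf d = L /\ (forall j, (d < j)%nat -> cf j = 0) /\
    forall x, f x = ssum (fun j => cf j * x ^ j) (S d).
Definition Poly d f := exists L, PolyL d L f.

Lemma PolyL_ext d L f g : (forall x, f x = g x) -> PolyL d L f -> PolyL d L g.
Proof. intros H [cf [H1 [H2 H3]]]. exists cf. repeat split; auto. intros x; rewrite <- H; auto. Qed.

Lemma PolyL_Leq d L L' f : PolyL d L f -> L = L' -> PolyL d L' f.
Proof. intros H <-. auto. Qed.

Lemma PolyL_plus d L1 L2 f g : PolyL d L1 f -> PolyL d L2 g -> PolyL d (L1 + L2) (fun x => f x + g x).
Proof. intros [c1 [H1 [H2 H3]]] [c2 [G1 [G2 G3]]]. exists (fun j => c1 j + c2 j).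
  repeat split. subst; auto. intros j Hj. rewrite H2, G2; auto; ring.
  intros x. rewrite H3, G3, <- ssum_plus. apply ssum_ext. intros; ring. Qed.

Lemma PolyL_scal d L k f : PolyL d L f -> PolyL d (k * L) (fun x => k * f x).
Proof. intros [c1 [H1 [H2 H3]]]. exists (fun j => k * c1 j).
  repeat split. subst; auto. intros j Hj. rewrite H2; auto; ring.
  intros x. rewrite H3, <- ssum_scal. apply ssum_ext. intros; ring. Qed.

Lemma PolyL_mulx d L f : PolyL d L f -> PolyL (S d) L (fun x => x * f x).
Proof. intros [c1 [H1 [H2 H3]]]. exists (sr c1).
  repeat split. simpl; auto. intros j Hj. destruct j. lia. simpl. apply H2. lia.
  intros x. rewrite H3, (ssum_shift (fun j => sr c1 j * x ^ j) (S d)), <- ssum_scal. simpl sr.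
  rewrite Rmult_0_l, Rplus_0_l. apply ssum_ext. intros; simpl; ring. Qed.

Lemma PolyL_lift d L f : PolyL d L f -> PolyL (S d) 0 f.
Proof. intros [c1 [H1 [H2 H3]]]. exists c1.
  repeat split. apply H2; lia. intros j Hj. apply H2. lia.
  intros x. rewrite H3. change (ssum (fun j => c1 j * x ^ j) (S (S d))) with
    (ssum (fun j => c1 j * x ^ j) (S d) + c1 (S d) * x ^ (S d)). rewrite (H2 (S d)) by lia. ring. Qed.

Lemma Poly_le d d' f : Poly d f -> (d <= d')%nat -> Poly d' f.
Proof. intros H Hle. induction Hle; auto. destruct IHHle as [L HL]. exists 0. eapply PolyL_lift; eauto. Qed.

Lemma PolyL_const k : PolyL 0 k (fun _ => k).
Proof. exists (dlt k). repeat split. intros j Hj. destruct j. lia. reflexivity.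
  intros x. simpl. ring. Qed.

Lemma Poly_zero d : Poly d (fun _ => 0).
Proof. exists 0. exists (fun _ => 0). repeat split. intros x.
  induction (S d); simpl. auto. rewrite <- IHn. ring. Qed.

Lemma Poly_ssum d (F : nat -> R -> R) n : (forall k, (k < n)%nat -> Poly d (F k)) ->
  Poly d (fun x => ssum (fun k => F k x) n).
Proof. induction n; intros H. apply Poly_zero.
  destruct IHn as [L1 H1]. intros; apply H; lia. destruct (H n) as [L2 H2]. lia.
  exists (L1 + L2). apply (PolyL_plus _ _ _ _ _ H1 H2). Qed.

Lemma Poly_plus d f g : Poly d f -> Poly d g -> Poly d (fun x => f x + g x).
Proof. intros [L1 H1] [L2 H2]. exists (L1 + L2). apply PolyL_plus; auto. Qed.
Lemma Poly_scal d k f : Poly d f -> Poly d (fun x => k * f x).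
Proof. intros [L1 H1]. exists (k * L1). apply PolyL_scal; auto. Qed.
Lemma Poly_mulx d f : Poly d f -> Poly (S d) (fun x => x * f x).
Proof. intros [L1 H1]. exists L1. apply PolyL_mulx; auto. Qed.

Definition Sk Z w k := (exists L, L <> 0 /\ PolyL k L (fun e => Phi Z w e (2 * k))) /\
                       Poly k (fun e => Phi Z w e (2 * k + 1)).

Lemma Phi_poly_all Z w : forall k, Sk Z w k.
Proof.
  assert (G : forall k k', (k' <= k)%nat -> Sk Z w k').
  { induction k; intros k' Hk'.
    - assert (k' = O) by lia. subst. split.
      + exists 1. split. lra. eapply PolyL_ext; [|apply PolyL_const]. intros x. reflexivity.
      + exists (-2 * Z * 1 / (1 * 2)). eapply PolyL_ext; [|apply PolyL_const]. intros x.
        simpl. rewrite Phi_S. unfold step, Phi. simpl. field.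
    - destruct (Nat.leb_spec k' k). apply IHk; auto. assert (k' = S k) by lia. subst.
      assert (Hl : forall l, (l <= 2 * k + 1)%nat -> Poly k (fun e => Phi Z w e l)).
      { intros l Hl. destruct (Nat.Even_or_Odd l) as [[k0 Hk0]|[k0 Hk0]]; subst l.
        - destruct (IHk k0 ltac:(lia)) as [[L [_ HL]] _]. apply (Poly_le k0). exists L; auto. lia.
        - destruct (IHk k0 ltac:(lia)) as [_ HP]. apply (Poly_le k0); auto. lia. }
      destruct (IHk k ltac:(lia)) as [[L [HL0 HL]] HP].
      set (D := INR (S (S (2 * k))) * INR (S (S (S (2 * k))))).
      assert (HD : D <> 0) by (unfold D; apply Rmult_integral_contrapositive; split; apply not_0_INR; lia).
      assert (Heven : PolyL (S k) (-2 / D * L) (fun e => Phi Z w e (2 * S k))).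
      { eapply PolyL_ext.
        2: { apply (PolyL_Leq _ (-2 * Z / D * 0 + 2 / D * 0 + -2 / D * L)); [|ring].
             apply (PolyL_plus _ (-2 * Z / D * 0 + 2 / D * 0) (-2 / D * L)).
             apply PolyL_plus. apply PolyL_scal. destruct HP as [L' HP']. eapply PolyL_lift; eauto.
             apply PolyL_scal. 
             destruct (Poly_ssum k (fun j e => wev w j * Phi Z w e (2 * k - j)) (S (2 * k))) as [L' HP'].
             intros j Hj. apply Poly_scal. apply Hl. lia.
             eapply PolyL_lift; eauto.
             apply PolyL_scal. apply PolyL_mulx. exact HL. }
        intros e. cbv beta. replace (2 * S k)%nat with (S (S (2 * k))) by lia. rewrite Phi_SS.
        replace (Phi Z w e (S (2 * k))) with (Phi Z w e (2 * k + 1)) by (f_equal; lia).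
        unfold conv. fold D. field. auto. }
      split.
      + exists (-2 / D * L). split; auto. unfold Rdiv. apply Rmult_integral_contrapositive. split; auto.
        apply Rmult_integral_contrapositive. split. lra. apply Rinv_neq_0_compat; auto.
      + set (D' := INR (S (S (2 * k + 1))) * INR (S (S (S (2 * k + 1))))).
        assert (Hodd : Poly (S k) (fun e => -2 * Z / D' * Phi Z w e (2 * S k) +
              (2 / D' * ssum (fun j => wev w j * Phi Z w e (2 * k + 1 - j)) (S (2 * k + 1)) +
               -2 / D' * (e * Phi Z w e (2 * k + 1))))).
        { apply Poly_plus. apply Poly_scal. exists (-2 / D * L); auto.
          apply Poly_plus. apply Poly_scal. apply (Poly_le k); [|lia].
          apply (Poly_ssum k (fun j e => wev w j * Phi Z w e (2 * k + 1 - j))).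
          intros j Hj. apply Poly_scal. apply Hl. lia.
          apply Poly_scal. apply Poly_mulx. auto. }
        destruct Hodd as [L' HL']. exists L'. eapply PolyL_ext; [|apply HL'].
        intros e. cbv beta. replace (2 * S k + 1)%nat with (S (S (2 * k + 1))) by lia. rewrite Phi_SS.
        replace (Phi Z w e (S (2 * k + 1))) with (Phi Z w e (2 * S k)) by (f_equal; lia).
        unfold conv. fold D'. field. unfold D'.
        apply Rmult_integral_contrapositive; split; apply not_0_INR; lia. }
  intros k. apply (G k). lia. Qed.

Lemma ssum_scal_r f c n : ssum (fun j => f j * c) n = ssum f n * c.
Proof. induction n; simpl; [ring|rewrite IHn; ring]. Qed.

Theorem lemma5p7 (Z : R) (W : R -> R) (w : nat -> R) (n : nat)
  (Rad : nat -> R -> R) (eps : nat -> R) (zeta : nat -> nat -> R) :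
  0 < Z ->
  W_at_hyp W w ->
  (forall i, (i < n)%nat -> radial_eigen Z W (eps i) (Rad i)) ->
  (forall i, (i < n)%nat -> singular_expansion (Rad i) (fun j => zeta j i)) ->
  (exists mu nu : nat -> nat -> R,
     (forall k, (k < n)%nat ->   (* 0 <= k <= n-1 *)
        mu k k <> 0 /\
        forall i, (i < n)%nat ->
          zeta (2 * k)%nat i = sum_f_R0 (fun j => mu k j * eps i ^ j * zeta 0%nat i) k /\
          zeta (2 * k + 1)%nat i = sum_f_R0 (fun j => nu k j * eps i ^ j * zeta 0%nat i) k)) /\
  (forall i, (i < n)%nat ->
     let z0 := zeta 0%nat i in
     let e := eps i in
     let w0 := w 0%nat in
     let w2 := w 1%nat in
     zeta 1%nat i = - Z * z0 /\
     zeta 2%nat i = - / 3 * e * z0 + / 3 * (Z ^ 2 + w0) * z0 /\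
     zeta 3%nat i = 2 / 9 * Z * e * z0 - (Z ^ 3 / 18 + 2 / 9 * Z * w0) * z0 /\
     zeta 4%nat i = / 30 * e ^ 2 * z0 - (Z ^ 2 / 18 + w0 / 15) * e * z0
                    + (Z ^ 4 / 180 + Z ^ 2 * w0 / 18 + w0 ^ 2 / 30 + w2 / 10) * z0 /\
     zeta 5%nat i = - (23 / 1350) * Z * e ^ 2 * z0
                    + (Z ^ 3 / 135 + 23 / 675 * w0 * Z) * e * z0
                    - (Z ^ 5 / 2700 + Z ^ 3 * w0 / 135 + 23 / 1350 * Z * w0 ^ 2
                       + 11 / 150 * Z * w2) * z0).
Proof.
  intros HZ HW Hrad Hsing.
  assert (Hrec : forall i, (i < n)%nat -> forall m,
            zeta (S m) i = step Z w (eps i) (fun j => zeta j i) m).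
  { intros i Hi m. exact (comp_rec Z W w (eps i) (Rad i) (fun j => zeta j i) HW (Hrad i Hi) (Hsing i Hi) m). }
  split.
  - assert (Hmu : forall k, { cf : nat -> R | cf k <> 0 /\
        forall x, Phi Z w x (2 * k) = ssum (fun j => cf j * x ^ j) (S k) }).
    { intros k. apply constructive_indefinite_description.
      destruct (Phi_poly_all Z w k) as [[L [HL0 [cf [H1 [_ H3]]]]] _].
      exists cf. split. congruence. auto. }
    assert (Hnu : forall k, { cf : nat -> R |
        forall x, Phi Z w x (2 * k + 1) = ssum (fun j => cf j * x ^ j) (S k) }).
    { intros k. apply constructive_indefinite_description.
      destruct (Phi_poly_all Z w k) as [_ [L [cf [_ [_ H3]]]]].
      exists cf. auto. }
    exists (fun k => proj1_sig (Hmu k)), (fun k => proj1_sig (Hnu k)).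
    intros k Hk. destruct (Hmu k) as [cf [Hc0 Hc]]. destruct (Hnu k) as [cg Hg]. simpl.
    split; auto. intros i Hi.
    assert (HA := a_Phi Z w (eps i) (fun j => zeta j i) (Hrec i Hi)). simpl in HA.
    rewrite !sum_f_R0_ssum. split.
    + rewrite HA, Hc, <- ssum_scal_r. apply ssum_ext. intros; ring.
    + rewrite HA, Hg, <- ssum_scal_r. apply ssum_ext. intros; ring.
  - intros i Hi. exact (explicit Z w (eps i) (fun j => zeta j i) (Hrec i Hi)).
Qed.
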